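(* Let $u$ be a partition with $\omega(u)=n\ge1$ and $d=d(u)$. Define $\Gamma$ by $n+d-2=2(u_1+2u_3+e)+\Gamma$. Then: (i) $\Gamma=-2$ if $\dot n=0$; (ii) $\Gamma=0$ if $\dot n=7\cdot 2^\alpha$ and $u_7=2^\alpha$ for some integer $\alpha\ge0$; (iii) $\Gamma=1$ if $\dot n=2$; (iv) $\Gamma\ge 2$ otherwise.
   Context: A partition is a sequence $u=(u_1,u_2,\dots)$ of nonnegative integers, almost all zero ($u_i$ = number of parts equal to $i$); weight $\omega(u)=\sum_i iu_i$, degree $d(u)=\sum_i u_i$; $\gamma_u=\prod_{i\ge1}(i+1)^{u_i}u_i!$. With $v=v_2$ the $2$-adic valuation, put $e=v(\gamma_u)-v((2u_1)!)-(2u_3+v(u_3!))$ and $\dot n=n-u_1-3u_3$ (equivalently, $\dot n$ is the weight and $e=v(\gamma_{\dot u})$ of the partition $\dot u$ obtained from $u$ by setting $\dot u_1=\dot u_3=0$ and $\dot u_i=u_i$ for $i\ne1,3$). *)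

(* Defs.v *)
From mathcomp Require Import all_boot all_order all_algebra.
Set Implicit Arguments. Unset Strict Implicit. Unset Printing Implicit Defensive.
Import Order.TTheory GRing.Theory Num.Theory.

(* A partition u = (u_1, u_2, ...) is represented by a finite sequence
   u : seq nat, with u_i := nth 0 u (i-1) for i >= 1 (entries beyond the
   sequence are 0). *)
Definition part (u : seq nat) (i : nat) : nat := nth 0 u i.-1.

Definition weight (u : seq nat) : nat := \sum_(i < size u) i.+1 * nth 0 u i.

Definition degree (u : seq nat) : nat := \sum_(i < size u) nth 0 u i.

Definition gammap (u : seq nat) : nat :=
  \prod_(i < size u) ((i.+2) ^ (nth 0 u i) * (nth 0 u i)`!).

Definition v2 (m : nat) : nat := logn 2 m.

Definition e_of (u : seq nat) : int :=
  (v2 (gammap u))%:Z - (v2 (part u 1).*2`!)%:Z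
  - ((2 * part u 3)%:Z + (v2 (part u 3)`!)%:Z).

Definition ndot (u : seq nat) : int :=
  (weight u)%:Z - (part u 1)%:Z - (3 * part u 3)%:Z.

Definition Gam (u : seq nat) : int :=
  (weight u)%:Z + (degree u)%:Z - 2
  - 2 * ((part u 1)%:Z + 2 * (part u 3)%:Z + e_of u).

(* Main.v *)
Require Import Defs.
From mathcomp Require Import all_boot all_order all_algebra zify.
Import Order.TTheory GRing.Theory Num.Theory.

Lemma v2_odd k : v2 k.*2.+1 = 0.
Proof. by apply: logn_coprime; rewrite coprime2n /= odd_double. Qed.

Lemma v2_dbl n : 0 < n -> v2 (n.*2) = (v2 n).+1.
Proof. move=> n0; rewrite /v2 -mul2n lognM // (logn_prime 2 (isT : prime 2)). Qed.

Lemma v2_fact_odd k : v2 (k.*2.+1)`! = v2 (k.*2)`!.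
Proof. by rewrite factS /v2 lognM ?fact_gt0 // -/(v2 _) v2_odd. Qed.

Lemma v2_fact_dbl k : v2 (k.*2)`! = k + v2 k`!.
Proof.
elim: k => // k IH.
rewrite doubleS factS /v2 lognM ?fact_gt0 // -/(v2 _) -/(v2 _).
rewrite v2_fact_odd IH -doubleS v2_dbl // factS /v2 lognM ?fact_gt0 //; lia.
Qed.

Lemma v2_fact_bound m : 0 < m ->
  v2 m`! < m /\ (v2 m`! = m.-1 -> exists a, m = 2 ^ a).
Proof.
elim/ltn_ind: m => m IH m0.
have Hm : odd m + (m./2).*2 = m := odd_double_half m.
move: (odd m) (m./2) Hm => b k Hm.
have Hv : v2 m`! = k + v2 k`!.
  rewrite -Hm; case: b {Hm} => /=; rewrite ?add1n ?v2_fact_odd v2_fact_dbl //.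
have [k0|kp] := posnP k.
  have b1 : b = true by destruct b; [done| rewrite k0 /= in Hm; lia].
  rewrite Hv k0 -Hm b1 k0; split => //; by exists 0.
have [IH1 IH2] := IH k (ltac:(lia)) kp.
rewrite Hv; split; first lia.
move=> E. have E1 : v2 k`! = k.-1 by lia.
have b0 : b = false by destruct b; [rewrite /= in Hm; lia|done].
have [a Ha] := IH2 E1. exists a.+1.
by rewrite -Hm b0 Ha expnS /= add0n -muln2 mulnC.
Qed.

Lemma v2_fact_pow a : v2 (2 ^ a)`! = (2 ^ a).-1.
Proof.
elim: a => // a IH.
rewrite expnS mul2n v2_fact_dbl IH.
have := expn_gt0 2 a; lia.
Qed.

Lemma pow_ge v : 4 <= v -> 2 * v + 4 <= 2 ^ v.
Proof.
elim: v => // v IH H.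
case: (ltnP v 4) => Hv.
  have -> : v = 3 by lia. by [].
have := IH Hv; rewrite expnS; lia.
Qed.

Lemma coef_bound c : 5 <= c -> c != 8 -> 2 * v2 c + 4 <= c.
Proof.
move=> c5 c8.
case: (ltnP c 16) => Hc.
  move: c Hc c5 c8; do 16! case=> //.
have c0 : 0 < c by lia.
have : 2 ^ v2 c <= c.
  apply: dvdn_leq => //; by rewrite pfactor_dvdn.
case: (ltnP (v2 c) 4) => Hv.
  lia.
have := @pow_ge _ Hv; lia.
Qed.

Definition tn (i m : nat) : nat := i.+2 * m - 2 * (m * v2 i.+2 + v2 m`!).

Lemma coef2 i : i != 0 -> i != 2 -> 2 * v2 i.+2 + 2 <= i.+2.
Proof.
move=> i0 i2.
case: (ltnP i.+2 5) => H.
  have -> : i = 1 by lia. by [].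
case: (eqVneq i.+2 8) => [->//|H8].
have := @coef_bound _ H H8; lia.
Qed.

Lemma fact_le m : v2 m`! <= m.-1.
Proof. case: (posnP m) => [->//|m0]. have [] := @v2_fact_bound _ m0. lia. Qed.

Lemma tn_eq i m : i != 0 -> i != 2 ->
  i.+2 * m = tn i m + 2 * (m * v2 i.+2 + v2 m`!).
Proof.
move=> i0 i2; rewrite /tn.
have := @coef2 _ i0 i2 => Hc.
have H : m * (2 * v2 i.+2 + 2) <= m * i.+2 by rewrite leq_mul2l Hc orbT.
have := fact_le m.
case: (posnP m) => [->|m0]; first by rewrite /= muln0 mul0n.
nia.
Qed.

Lemma tn_pos i m : i != 0 -> i != 2 -> 0 < m -> 2 <= tn i m.
Proof.
move=> i0 i2 m0; rewrite /tn.
have := @coef2 _ i0 i2 => Hc.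
have H : m * (2 * v2 i.+2 + 2) <= m * i.+2 by rewrite leq_mul2l Hc orbT.
have := fact_le m. nia.
Qed.

Lemma tn4 i m : i != 0 -> i != 2 -> 0 < m -> ~ (i = 1 /\ m = 1) ->
  (i = 6 -> forall a, m <> 2 ^ a) -> 4 <= tn i m.
Proof.
move=> i0 i2 m0 H1 H6; rewrite /tn.
have := fact_le m => Hf.
case: (eqVneq i 1) => [E1|n1].
  subst i. have -> : v2 3 = 0 by []. have : m <> 1 by move=> E; apply: H1. lia.
case: (eqVneq i 6) => [E6|n6].
  subst i. have -> : v2 8 = 3 by [].
  have [Hl Heq] := @v2_fact_bound _ m0.
  have : v2 m`! <> m.-1.
    by move=> E; have [a Ha] := Heq E; apply: (H6 erefl a).
  lia.
have c5 : 5 <= i.+2 by lia.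
have c8 : i.+2 != 8 by apply/eqP; lia.
have Hc := @coef_bound _ c5 c8.
have H : m * (2 * v2 i.+2 + 4) <= m * i.+2 by rewrite leq_mul2l Hc orbT.
nia.
Qed.

Lemma tn11 : tn 1 1 = 3. Proof. by []. Qed.
Lemma tn6 a : tn 6 (2 ^ a) = 2.
Proof. rewrite /tn v2_fact_pow. have -> : v2 8 = 3 by []. have := expn_gt0 2 a. lia. Qed.
Lemma tn0 i : tn i 0 = 0. Proof. by rewrite /tn muln0. Qed.

Lemma sum_lemma (I : finType) (Q : pred I) (w t : I -> nat) :
  (forall i, Q i -> w i = 0 -> t i = 0) ->
  (forall i, Q i -> 0 < w i -> 2 <= t i) ->
  (\sum_(i | Q i) w i = 0 -> \sum_(i | Q i) t i = 0) /\
  (0 < \sum_(i | Q i) w i -> 2 <= \sum_(i | Q i) t i).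
Proof.
move=> H0 H2; split.
  move/eqP; rewrite sum_nat_eq0 => /forallP Hw.
  apply: big1 => i Qi; apply: H0 => //; apply/eqP; exact: (implyP (Hw i) Qi).
have [j /andP[Qj wj]|none] := pickP (fun i => Q i && (0 < w i)).
  move=> _; rewrite (bigD1 j) //=; have := H2 j Qj wj; lia.
rewrite big1 // => i Qi; have := none i; rewrite /= Qi /=; lia.
Qed.

Lemma pos_ex (I : finType) (Q : pred I) (w : I -> nat) :
  0 < \sum_(i | Q i) w i -> exists j, Q j && (0 < w j).
Proof.
have [j Hj|none] := pickP (fun i => Q i && (0 < w i)); first by exists j.
rewrite big1 // => i Qi; have := none i; rewrite /= Qi /=; lia.
Qed.

Lemma widen (u : seq nat) (F : nat -> nat -> nat) : (forall i, F i 0 = 0) ->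
  \sum_(i < size u) F i (nth 0 u i) = \sum_(i < size u + 7) F i (nth 0 u i).
Proof.
move=> F0.
rewrite -(big_mkord xpredT (fun i => F i (nth 0 u i))).
rewrite -(big_mkord xpredT (fun i => F i (nth 0 u i))).
rewrite [RHS](@big_cat_nat _ _ _ (size u)) ?leq_addr //=.
rewrite [X in _ + X]big1_seq ?addn0 // => i /andP[_].
rewrite mem_index_iota => /andP[Hi _]; by rewrite nth_default.
Qed.

Lemma v2_gamma u :
  v2 (gammap u) = \sum_(i < size u) (nth 0 u i * v2 i.+2 + v2 (nth 0 u i)`!).
Proof.
rewrite /gammap.
set P := \prod_(_ < _) _; set S := \sum_(_ < _) _.
suff : 0 < P /\ v2 P = S by case.
rewrite /P /S.
apply: (big_rec2 (fun p s => 0 < p /\ v2 p = s)) => // i p s _ [p0 <-].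
have hp : 0 < i.+2 ^ nth 0 u i * (nth 0 u i)`! by rewrite muln_gt0 expn_gt0 fact_gt0.
split; first by rewrite muln_gt0 hp.
rewrite /v2 lognM // lognM ?expn_gt0 ?fact_gt0 // lognX. by [].
Qed.

Lemma split3 N (F : nat -> nat) : 2 < N ->
  \sum_(i < N) F i = F 0 + F 2 +
    \sum_(i < N | (i != 0 :> nat) && (i != 2 :> nat)) F i.
Proof.
move=> N2.
have h0 : 0 < N by lia.
rewrite (bigD1 (Ordinal h0)) //= (bigD1 (Ordinal N2)) //= addnA.
congr (_ + _); apply: eq_bigl => i /=.
Qed.



Lemma comb N (x : nat -> nat) : 6 < N ->
  let P := fun i : 'I_N => (i != 0 :> nat) && (i != 2 :> nat) in
  let Wd := \sum_(i < N | P i) (i.+1 * x i) in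
  let T := \sum_(i < N | P i) tn i (x i) in
  [/\ Wd = 0 -> T = 0,
      forall a, Wd = 7 * 2 ^ a -> x 6 = 2 ^ a -> T = 2,
      Wd = 2 -> T = 3
    & Wd <> 0 -> Wd <> 2 -> ~ (exists a, Wd = 7 * 2 ^ a /\ x 6 = 2 ^ a) -> 4 <= T].
Proof.
move=> h6 P Wd T.
have H0 : forall i : 'I_N, P i -> i.+1 * x i = 0 -> tn i (x i) = 0.
  by move=> i _ /eqP; rewrite muln_eq0 /= => /eqP ->; rewrite tn0.
have H2 : forall i : 'I_N, P i -> 0 < i.+1 * x i -> 2 <= tn i (x i).
  move=> i /andP[i0 i2]; rewrite muln_gt0 /= => xi; exact: tn_pos.
have [S0 S2] := @sum_lemma _ P (fun i : 'I_N => i.+1 * x i) (fun i : 'I_N => tn i (x i)) H0 H2.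
have Hsplit : forall j : 'I_N, P j ->
   Wd = j.+1 * x j + \sum_(i < N | P i && (i != j)) (i.+1 * x i) /\
   T = tn j (x j) + \sum_(i < N | P i && (i != j)) tn i (x i).
  move=> j Pj; rewrite /Wd /T (bigD1 j Pj) [in X in _ /\ X](bigD1 j Pj) //.
have HR : forall j : 'I_N,
  (\sum_(i < N | P i && (i != j)) (i.+1 * x i) = 0 -> \sum_(i < N | P i && (i != j)) tn i (x i) = 0) /\
  (0 < \sum_(i < N | P i && (i != j)) (i.+1 * x i) -> 2 <= \sum_(i < N | P i && (i != j)) tn i (x i)).
  move=> j; apply: (@sum_lemma _ (fun i => P i && (i != j)) (fun i : 'I_N => i.+1 * x i) (fun i : 'I_N => tn i (x i))).
    by move=> i /andP[Pi _]; exact: H0.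
  by move=> i /andP[Pi _]; exact: H2.
split.
- exact: S0.
- move=> a Ea E7.
  pose j := Ordinal h6.
  have Pj : P j by [].
  have [HWj HTj] := Hsplit j Pj.
  have [R0 _] := HR j.
  have j6 : nat_of_ord j = 6 by [].
  rewrite HTj R0; last by move: Ea; rewrite HWj j6 E7; lia.
  by rewrite j6 E7 tn6.
- move=> E.
  have : 0 < Wd by rewrite E.
  move/pos_ex => [j /andP[Pj wj]].
  have [HWj HTj] := Hsplit j Pj.
  have [R0 _] := HR j.
  move: (Pj) => /andP[j0 j2].
  have xj : 0 < x j by move: wj; rewrite muln_gt0.
  have j1 : nat_of_ord j = 1 by nia.
  have x1 : x j = 1 by have := xj; move: HWj; rewrite E j1; lia.
  rewrite HTj R0; last by move: HWj; rewrite E x1 j1; lia.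
  by rewrite x1 j1 tn11.
- move=> E0 E2 Ex.
  have : 0 < Wd by lia.
  move/pos_ex => [j /andP[Pj wj]].
  have [HWj HTj] := Hsplit j Pj.
  have [R0 R2] := HR j.
  move: (Pj) => /andP[j0 j2].
  have xj0 : 0 < x j by move: wj; rewrite muln_gt0.
  case: (posnP (\sum_(i < N | P i && (i != j)) (i.+1 * x i))) => Hr.
    have Hr' := R0 Hr.
    have : 4 <= tn j (x j).
      apply: tn4 => //.
        move=> [j1 x1]; apply: E2; rewrite HWj Hr x1 j1 //.
      move=> j6 a xa; apply: Ex; exists a; rewrite HWj Hr addn0 xa j6; split=> //.
      by rewrite -xa j6.
    move: HTj; rewrite Hr'; lia.
  have := R2 Hr; have := @tn_pos _ _ j0 j2 xj0; move: HTj; lia.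
Qed.

Local Open Scope ring_scope.

Theorem lemma4p6 (u : seq nat) :
  (1 <= weight u)%N ->
  [/\ ndot u = 0 -> Gam u = -2,
      (forall alpha : nat,
         ndot u = (7 * 2 ^ alpha)%N%:Z -> part u 7 = (2 ^ alpha)%N -> Gam u = 0),
      ndot u = 2 -> Gam u = 1
    & (ndot u <> 0 -> ndot u <> 2 ->
       ~ (exists alpha : nat,
            ndot u = (7 * 2 ^ alpha)%N%:Z /\ part u 7 = (2 ^ alpha)%N) ->
       2 <= Gam u)].
Proof.
move=> _.
set N := (size u + 7)%N.
set x := fun i => nth 0%N u i.
pose P := fun i : 'I_N => (i != 0 :> nat) && (i != 2 :> nat).
pose Wd := (\sum_(i < N | P i) (i.+1 * x i))%N.
pose T := (\sum_(i < N | P i) tn i (x i))%N.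
have N2 : (2 < N)%N by rewrite /N; lia.
have HW : weight u = (x 0%N + 3 * x 2%N + Wd)%N.
  rewrite /weight (widen u (fun i m => i.+1 * m)%N); last by move=> i; rewrite muln0.
  by rewrite (@split3 _ (fun i => i.+1 * x i)%N) // mul1n.
have HD : degree u = (x 0%N + x 2%N + \sum_(i < N | P i) x i)%N.
  rewrite /degree (widen u (fun i m => m)) //.
  by rewrite (@split3 _ (fun i => x i) N2).
have HV : v2 (gammap u) = (x 0%N + v2 (x 0%N)`! + (2 * x 2%N + v2 (x 2%N)`!) +
     \sum_(i < N | P i) (x i * v2 i.+2 + v2 (x i)`!))%N.
  rewrite v2_gamma (widen u (fun i m => m * v2 i.+2 + v2 m`!)%N) //.
  rewrite (@split3 _ (fun i => x i * v2 i.+2 + v2 (x i)`!)%N) //.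
  have -> : v2 2 = 1%N by []. have -> : v2 4 = 2%N by [].
  by rewrite muln1 (mulnC (x 2%N)).
have HT : (Wd + \sum_(i < N | P i) x i = T + 2 * \sum_(i < N | P i) (x i * v2 i.+2 + v2 (x i)`!))%N.
  rewrite /Wd /T -big_split big_distrr -big_split /=.
  apply: eq_bigr => i /andP[i0 i2].
  rewrite -tn_eq //; lia.
have HG : Gam u = (T%:Z - 2).
  rewrite /Gam /e_of /part /= HW HD HV -/(x 0%N) -/(x 2%N) v2_fact_dbl.
  move: HT; lia.
have HN : ndot u = Wd%:Z.
  rewrite /ndot /part /= HW -/(x 0%N) -/(x 2%N); lia.
have Hp7 : part u 7 = x 6%N by [].
have h6 : (6 < N)%N by rewrite /N; lia.
have [C0 C1 C2 C3] := @comb N x h6.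
rewrite -/P -/Wd -/T in C0 C1 C2 C3.
clear HW HD HV HT.
rewrite HG HN Hp7.
split.
- move=> E; rewrite C0 //; lia.
- move=> a Ea E7; rewrite (C1 a) //; lia.
- move=> E; rewrite C2 //; lia.
- move=> E0 E2 Ex.
  have : (4 <= T)%N.
    apply: C3; [lia|lia|].
    move=> [a [Ea E7]]; apply: Ex; exists a; split=> //; lia.
  lia.
Qed.
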